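(* Let $k$ be a field of characteristic different from $2$ and let $\alpha\in k^\times$. There exist positive integers $a,b$ such that $a\langle 1\rangle = b\langle 2,2\alpha\rangle$ in $GW(k)$ if and only if $\alpha$ is a sum of squares in $k^\times$.
   Context: $GW(k)$ is the Grothendieck–Witt ring of $k$, generated as an abelian group by the one-dimensional quadratic forms $\langle a\rangle$, $a\in k^\times/(k^\times)^2$, with $\langle a\rangle+\langle b\rangle=\langle a,b\rangle$ (orthogonal sum) and $\langle a\rangle\langle b\rangle=\langle ab\rangle$. ''$\alpha$ is a sum of squares in $k^\times$'' means $\alpha=x_1^2+\cdots+x_m^2$ for some $m\ge1$ and $x_i\in k^\times$. *)

(* Defs.v *)
From mathcomp Require Import all_boot all_order all_algebra.
Set Implicit Arguments. Unset Strict Implicit. Unset Printing Implicit Defensive.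
Import GRing.Theory.
Local Open Scope ring_scope.

Section GW.
Variable k : fieldType.

Definition dform (s : seq k) : 'M[k]_(size s) :=
  \matrix_(i, j) (if i == j then s`_i else 0).

Definition nondeg_sym n (A : 'M[k]_n) : Prop := A^T = A /\ A \in unitmx.

Definition isometric n (A B : 'M[k]_n) : Prop :=
  exists P : 'M[k]_n, P \in unitmx /\ P^T *m A *m P = B.

(* Equality of the classes [A] and [B] in GW(k), the Grothendieck group of
   the monoid (under orthogonal sum) of isometry classes of nondegenerate
   symmetric bilinear forms: [A] = [B] iff A (+) C ~ B (+) C for some
   nondegenerate symmetric C. *)
Definition gw_eq n m (A : 'M[k]_n) (B : 'M[k]_m) : Prop :=
  exists (r : nat) (C : 'M[k]_r), nondeg_sym C /\
    exists e : (n + r = m + r)%N,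
      isometric (castmx (e, e) (block_mx A 0 0 C)) (block_mx B 0 0 C).

End GW.

(* Main.v *)
Require Import Defs.
From mathcomp Require Import all_boot all_order all_algebra.
From mathcomp Require Import ring zify.
From mathcomp Require Import fingroup perm.
From Stdlib Require Import Classical.
Set Implicit Arguments. Unset Strict Implicit. Unset Printing Implicit Defensive.
Import GRing.Theory.
Local Open Scope ring_scope.

Section QF.
Variable k : fieldType.

Definition qf n (M : 'M[k]_n) (v : 'rV[k]_n) : k := (v *m M *m v^T) 0 0.

Lemma qf_block n1 n2 (A : 'M[k]_n1) (D : 'M[k]_n2) u w :
  qf (block_mx A 0 0 D) (row_mx u w) = qf A u + qf D w.
Proof.
rewrite /qf mul_row_block tr_row_mx mul_row_col !mulmx0 addr0 add0r mxE.
by [].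
Qed.

Lemma qf_opp n (M : 'M[k]_n) v : qf (- M) v = - qf M v.
Proof. by rewrite /qf mulmxN mulNmx mxE. Qed.

Lemma qf_vopp n (M : 'M[k]_n) v : qf M (- v) = qf M v.
Proof. by rewrite /qf linearN /= mulNmx mulmxN mulNmx opprK. Qed.

Lemma qf0 n (M : 'M[k]_n) : qf M 0 = 0.
Proof. by rewrite /qf !mul0mx mxE. Qed.

Lemma qf_mul n p (M : 'M[k]_n) (V : 'M[k]_(p, n)) x :
  qf M (x *m V) = qf (V *m M *m V^T) x.
Proof. by rewrite /qf trmx_mul !mulmxA. Qed.

Lemma qf1 n (x : 'rV[k]_n) : qf 1%:M x = \sum_i x 0 i ^+ 2.
Proof. by rewrite /qf mulmx1 mxE; apply: eq_bigr => i _; rewrite mxE. Qed.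

Variable pos : k -> Prop.
Hypothesis pos_add : forall x y, pos x -> pos y -> pos (x + y).
Hypothesis pos0 : ~ pos 0.

Definition hasPos n (M : 'M[k]_n) p :=
  exists U : 'M[k]_(p, n), forall x : 'rV_p, x != 0 -> pos (qf M (x *m U)).
Definition hasNeg n (M : 'M[k]_n) p :=
  exists U : 'M[k]_(p, n), forall x : 'rV_p, x != 0 -> pos (- qf M (x *m U)).

Lemma ineq n (M : 'M[k]_n) p q : hasPos M p -> hasNeg M q -> (p + q <= n)%N.
Proof.
move=> [U hU] [W hW]; rewrite leqNgt; apply/negP => hlt.
set Z := col_mx U W.
have hr : (0 < \rank (kermx Z))%N.
  by rewrite mxrank_ker subn_gt0 (leq_ltn_trans (rank_leq_col Z) hlt).
have [i hi] : exists i, row i (kermx Z) != 0.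
  apply/existsP; move: hr; apply: contraLR; rewrite negb_exists => /forallP h.
  suff -> : kermx Z = 0 by rewrite mxrank0.
  by apply/row_matrixP => i; rewrite row0; apply/eqP; move: (h i); rewrite negbK.
set z := row i (kermx Z).
have hz : z *m Z = 0 by apply/sub_kermxP; apply: row_sub.
set x := lsubmx z; set y := rsubmx z.
have hxy : row_mx x y != 0 by rewrite hsubmxK.
have hsum : x *m U + y *m W = 0 by rewrite -mul_row_col hsubmxK.
have e : x *m U = - (y *m W) by apply/eqP; rewrite -addr_eq0 hsum.
have [x0|xn0] := eqVneq x 0.
  have yn0 : y != 0.
    apply/negP => /eqP y0; move: hxy; rewrite x0 y0 row_mx0 eqxx //.
  move: e; rewrite x0 mul0mx => /eqP; rewrite eq_sym oppr_eq0 => /eqP e.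
  by move: (hW _ yn0); rewrite e qf0 oppr0.
have yn0 : y != 0.
  apply/negP => /eqP y0; move: (hU _ xn0); rewrite e y0 mul0mx oppr0 qf0 //.
have := pos_add (hU _ xn0) (hW _ yn0).
by rewrite e qf_vopp subrr.
Qed.

Lemma hasNeg_congr n (M1 M2 : 'M[k]_n) P q :
  P^T *m M1 *m P = M2 -> hasNeg M2 q -> hasNeg M1 q.
Proof.
move=> h [W hW]; exists (W *m P^T) => x /hW.
by rewrite qf_mul -h qf_mul trmx_mul trmxK !mulmxA.
Qed.

End QF.

Section SOS.
Variable k : fieldType.
Hypothesis two_neq0 : (2%:R : k) != 0.

Definition SOS (t : k) := exists l : seq k, t = \sum_(y <- l) y ^+ 2.
Definition sosnz (alpha : k) := exists (m : nat) (x : 'I_m.+1 -> k),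
     (forall i, x i != 0) /\ alpha = \sum_(i < m.+1) x i ^+ 2.

Lemma SOS0 : SOS 0. Proof. by exists [::]; rewrite big_nil. Qed.
Lemma SOSsq y : SOS (y ^+ 2). Proof. by exists [:: y]; rewrite big_seq1. Qed.
Lemma SOSD s t : SOS s -> SOS t -> SOS (s + t).
Proof. by move=> [l1 ->] [l2 ->]; exists (l1 ++ l2); rewrite big_cat. Qed.
Lemma SOSM s t : SOS s -> SOS t -> SOS (s * t).
Proof.
move=> [l1 ->] [l2 ->]; exists [seq y.1 * y.2 | y <- [seq (a, b) | a <- l1, b <- l2]].
rewrite big_map big_allpairs mulr_suml; apply: eq_bigr => a _.
by rewrite mulr_sumr; apply: eq_bigr => b _; rewrite exprMn.
Qed.
Lemma SOSV s : SOS s -> SOS (s^-1).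
Proof.
move=> h; have -> : s^-1 = s * (s^-1) ^+ 2.
  have [->|s0] := eqVneq s 0; first by rewrite invr0 mul0r.
  by rewrite expr2 mulrA mulfV // mul1r.
by apply: SOSM => //; apply: SOSsq.
Qed.
Lemma SOSbig I (r : seq I) (P : pred I) (f : I -> k) :
  SOS (\sum_(i <- r | P i) f i ^+ 2).
Proof. by apply: (big_ind SOS SOS0 SOSD) => i _; apply: SOSsq. Qed.

Lemma SOS_sosnz (a : k) : a != 0 -> SOS a -> sosnz a.
Proof.
move=> a0 [l ha].
set l' := [seq y <- l | y != 0].
have hl' : a = \sum_(y <- l') y ^+ 2.
  rewrite ha big_filter [X in _ = X]big_mkcond /=; apply: eq_bigr => y _.
  by case: eqP => // ->; rewrite expr0n.
case El: l' hl' => [|y0 l0] hl'.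
  by move: a0; rewrite hl' big_nil eqxx.
exists (size l0), (fun i => nth 0 (y0 :: l0) i); split.
  move=> i; have : nth 0 (y0 :: l0) i \in l'.
    by rewrite El mem_nth.
  by rewrite mem_filter => /andP [].
by rewrite hl' (big_nth 0) /= big_mkord.
Qed.

Variable alpha : k.
Hypothesis alpha0 : alpha != 0.
Hypothesis notS : ~ sosnz alpha.

Lemma notSOSa : ~ SOS alpha.
Proof. by move=> h; apply: notS; apply: SOS_sosnz. Qed.

Lemma lemA s1 s2 : SOS s1 -> SOS s2 -> s1 = alpha * s2 -> s2 = 0.
Proof.
move=> h1 h2 e; apply/eqP; apply/negP => /negP s20; apply: notSOSa.
have -> : alpha = s1 * s2^-1 by rewrite e mulfK.
by apply: SOSM => //; apply: SOSV.
Qed.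

Lemma neg1 : ~ SOS (-1).
Proof.
move=> h; apply: notSOSa.
have -> : alpha = ((alpha + 1) / 2%:R) ^+ 2 + (-1) * ((alpha - 1) / 2%:R) ^+ 2.
  by field.
by apply: SOSD; [apply: SOSsq | apply: SOSM => //; apply: SOSsq].
Qed.

Lemma lemB s t : SOS s -> SOS t -> s + t = 0 -> s = 0.
Proof.
move=> hs ht e; apply/eqP; apply/negP => /negP s0; apply: neg1.
have -> : -1 = t * s^-1.
  have -> : t = - s by apply/eqP; rewrite -addr_eq0 addrC e.
  by rewrite mulNr mulfV.
by apply: SOSM => //; apply: SOSV.
Qed.

Lemma lemB' s t : SOS s -> SOS t -> s != 0 -> s + t != 0.
Proof. by move=> hs ht s0; apply/negP => /eqP /(lemB hs ht) /eqP; rewrite (negbTE s0). Qed.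

Definition cone (t : k) := t != 0 /\ exists s1 s2, SOS s1 /\ SOS s2 /\ t = s1 - alpha * s2.

Lemma cone_add x y : cone x -> cone y -> cone (x + y).
Proof.
move=> [x0 [s1 [s2 [h1 [h2 ex]]]]] [y0 [s3 [s4 [h3 [h4 ey]]]]].
have e : x + y = (s1 + s3) - alpha * (s2 + s4) by rewrite ex ey; ring.
split; last by exists (s1 + s3), (s2 + s4); do !split => //; apply: SOSD.
apply/negP => /eqP h.
have h24 : s2 + s4 = 0.
  apply: (lemA (SOSD h1 h3) (SOSD h2 h4)); apply/eqP; rewrite -subr_eq0 -e h //.
have s2z := lemB h2 h4 h24.
have h13 : s1 + s3 = 0 by move/eqP: h; rewrite e h24 mulr0 subr0 => /eqP.
have s1z := lemB h1 h3 h13.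
by move: x0; rewrite ex s1z s2z mulr0 subr0 eqxx.
Qed.

Lemma cone0 : ~ cone 0.
Proof. by case; rewrite eqxx. Qed.

End SOS.

Section Fwd.
Variable k : fieldType.
Hypothesis two_neq0 : (2%:R : k) != 0.

Definition bf n (C : 'M[k]_n) (u v : 'rV[k]_n) := (u *m C *m v^T) 0 0.

Lemma bfDl n (C : 'M[k]_n) u u' v : bf C (u + u') v = bf C u v + bf C u' v.
Proof. by rewrite /bf !mulmxDl mxE. Qed.
Lemma bfDr n (C : 'M[k]_n) u v v' : bf C u (v + v') = bf C u v + bf C u v'.
Proof. by rewrite /bf linearD /= !mulmxDr mxE. Qed.
Lemma bfNl n (C : 'M[k]_n) u v : bf C (- u) v = - bf C u v.
Proof. by rewrite /bf !mulNmx mxE. Qed.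
Lemma bfNr n (C : 'M[k]_n) u v : bf C u (- v) = - bf C u v.
Proof. by rewrite /bf linearN /= !mulmxN mxE. Qed.
Lemma bfC n (C : 'M[k]_n) u v : C^T = C -> bf C u v = bf C v u.
Proof.
move=> hC; rewrite /bf.
have -> : (u *m C *m v^T) 0 0 = ((u *m C *m v^T)^T) 0 0 by rewrite [X in _ = X]mxE.
by rewrite !trmx_mul trmxK hC mulmxA.
Qed.

Lemma CmC n (C : 'M[k]_n) (x : 'rV_n) : C^T = C -> C \in unitmx ->
  qf C (x + x *m invmx C) - qf C (x - x *m invmx C) = 2%:R ^+ 2 * qf 1%:M x.
Proof.
move=> hC hu; set y := x *m invmx C.
have hq : forall u, qf C u = bf C u u by [].
rewrite !hq !bfDl !bfDr !bfNl !bfNr (bfC y x hC).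
have -> : bf C x y = qf 1%:M x.
  by rewrite /bf /qf /y trmx_mul trmx_inv hC -mulmxA (mulmxA C) mulmxV // mul1mx mulmx1.
ring.
Qed.

Lemma rv_nz n (x : 'rV[k]_n) : x != 0 -> exists i, x 0 i != 0.
Proof.
move=> h; apply/existsP; move: h; apply: contraLR; rewrite negb_exists => /forallP hx.
rewrite negbK; apply/eqP/matrixP => i j; rewrite (ord1 i) mxE; move: (hx j); rewrite negbK => /eqP //.
Qed.

Variable alpha : k.
Hypothesis alpha0 : alpha != 0.
Hypothesis notS : ~ sosnz alpha.

Lemma sumsq_nz n (x : 'rV[k]_n) : x != 0 -> \sum_i x 0 i ^+ 2 != 0.
Proof.
move=> /rv_nz [i hi]; rewrite (bigD1 i) //=.
apply: (lemB' two_neq0 alpha0 notS); [apply: SOSsq | apply: SOSbig | by rewrite expf_neq0].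
Qed.

Lemma cone_of s1 s2 : SOS s1 -> SOS s2 -> s1 != 0 \/ s2 != 0 -> cone alpha (s1 - alpha * s2).
Proof.
move=> h1 h2 hnz; split; last by exists s1, s2.
apply/negP => /eqP e.
have e' : s1 = alpha * s2 by apply/eqP; rewrite -subr_eq0 e.
have s2z := lemA alpha0 notS h1 h2 e'.
by case: hnz => /negP h; apply: h; [rewrite e' s2z mulr0 | rewrite s2z].
Qed.

End Fwd.

Section L.
Variable k : fieldType.

Lemma qf_dform (s : seq k) v : qf (dform s) v = \sum_(i < size s) s`_i * v 0 i ^+ 2.
Proof.
rewrite /qf /dform mxE; apply: eq_bigr => j _; rewrite !mxE.
rewrite (bigD1 j) //= big1 => [|l /negbTE hl]; last by rewrite !mxE hl mulr0.
by rewrite !mxE eqxx addr0 expr2 [v 0 j * _]mulrC -mulrA.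
Qed.

Lemma dform_nseq1 a : dform (nseq a (1 : k)) = 1%:M.
Proof.
apply/matrixP => i j; rewrite !mxE nth_nseq.
have : (i < a)%N by have := ltn_ord i; rewrite {2}size_nseq. move=> -> ; by case: eqP.
Qed.

Definition Lb (u w : k) b := flatten (nseq b [:: u; w]).

Lemma size_Lb u w b : size (Lb u w b) = b.*2.
Proof. by elim: b => //= b IH; rewrite IH. Qed.

Lemma nth_Lb u w b j : (j < b.*2)%N -> (Lb u w b)`_j = if odd j then w else u.
Proof.
elim: b j => [|b IH] [|[|j]] //= hj.
by rewrite IH //; rewrite doubleS in hj; rewrite negbK.
Qed.

Definition Vb u w b : 'M[k]_(b, size (Lb u w b)) :=
  \matrix_(i, j) ((j : nat) == (i : nat).*2.+1)%:R.

Lemma xV_even u w b (x : 'rV[k]_b) (j : 'I_(size (Lb u w b))) : ~~ odd j -> (x *m Vb u w b) 0 j = 0.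
Proof.
move=> hj; rewrite mxE big1 // => i _; rewrite mxE.
case: eqP => [e|_]; last by rewrite mulr0.
by move: hj; rewrite e /= odd_double.
Qed.

Lemma xV_odd u w b (x : 'rV[k]_b) (i : 'I_b) (j : 'I_(size (Lb u w b))) :
  (j : nat) = (i : nat).*2.+1 -> (x *m Vb u w b) 0 j = x 0 i.
Proof.
move=> hj; rewrite mxE (bigD1 i) //= big1 => [|l hl]; rewrite mxE.
  by rewrite hj eqxx mulr1 addr0.
case: eqP => [e|_]; last by rewrite mulr0.
move: hl; rewrite hj in e; move: e => /eqP; rewrite eqSS -!muln2 eqn_mul2r /= => /eqP e.
by rewrite (_ : l = i) ?eqxx //; apply: val_inj.
Qed.

End L.

Section Fwd2.
Variable k : fieldType.
Hypothesis two_neq0 : (2%:R : k) != 0.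
Variable alpha : k.
Hypothesis alpha0 : alpha != 0.
Hypothesis notS : ~ sosnz alpha.

Lemma negB b (x : 'rV[k]_b) : exists S, SOS S /\ (x != 0 -> S != 0) /\
  qf (dform (Lb 2%:R (2%:R * alpha) b)) (x *m Vb 2%:R (2%:R * alpha) b) = alpha * S.
Proof.
set L := Lb _ _ b; set w := x *m _.
have hT : forall j : 'I_(size L), SOS (if odd j then w 0 j ^+ 2 + w 0 j ^+ 2 else 0).
  by move=> j; case: ifP => _; [apply: SOSD; apply: SOSsq | apply: SOS0].
exists (\sum_(j < size L) (if odd j then w 0 j ^+ 2 + w 0 j ^+ 2 else 0)); split.
  by apply: (big_ind (@SOS k) (SOS0 k) (@SOSD k)) => j _; apply: hT.
split.
  move=> /rv_nz [i hi].
  have hj : (i.*2.+1 < size L)%N by rewrite size_Lb -!muln2; have := ltn_ord i; lia.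
  rewrite (bigD1 (Ordinal hj)) //=.
  rewrite odd_double /= (@xV_odd _ _ _ _ x i (Ordinal hj)) //.
  apply: (lemB' two_neq0 alpha0 notS); first by apply: SOSD; apply: SOSsq.
    by apply: (big_ind (@SOS k) (SOS0 k) (@SOSD k)) => j _; apply: hT.
  have -> : x 0 i ^+ 2 + x 0 i ^+ 2 = 2%:R * x 0 i ^+ 2 by ring.
  by rewrite mulf_neq0 // expf_neq0.
rewrite qf_dform mulr_sumr; apply: eq_bigr => j _.
have hj : (j < b.*2)%N by rewrite -(size_Lb (2%:R : k) (2%:R * alpha)); apply: ltn_ord.
rewrite /L nth_Lb //; case: ifP => hodd.
  ring.
by rewrite /w xV_even ?hodd // expr0n /= !mulr0.
Qed.

End Fwd2.

Section Bwd.
Variable k : fieldType.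

Definition Good n (s : k) := exists P : 'M[k]_n, P^T *m P = s%:M /\ P *m P^T = s%:M.

Lemma good_sq n y : Good n (y ^+ 2).
Proof. by exists y%:M; rewrite tr_scalar_mx -scalar_mxM expr2. Qed.

Lemma sc_add n (a b : k) : (a + b)%:M = a%:M + b%:M :> 'M[k]_n.
Proof. by rewrite raddfD. Qed.

Lemma good_double n s1 s2 : Good n s1 -> Good n s2 -> Good (n + n) (s1 + s2).
Proof.
move=> [A [hA1 hA2]] [C [hC1 hC2]].
have [s10|s1n0] := eqVneq s1 0.
  exists (block_mx C 0 0 C); rewrite s10 add0r tr_block_mx !trmx0 !mulmx_block.
  by rewrite !mulmx0 !mul0mx !addr0 !add0r hC1 hC2 -scalar_mx_block.
set c := s1^-1.
set B := - (c *: (A *m C^T *m A)).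
have hBt : B^T = - (c *: (A^T *m C *m A^T)).
  by rewrite /B linearN linearZ /= !trmx_mul trmxK mulmxA.
exists (block_mx A B C A); rewrite tr_block_mx hBt !mulmx_block; split.
  rewrite [(s1 + s2)%:M]scalar_mx_block; congr block_mx.
  - by rewrite hA1 hC1 sc_add.
  - rewrite /B mulmxN -scalemxAr !mulmxA hA1 mul_scalar_mx -scalemxAl scalerA.
    by rewrite /c mulVf // scale1r addNr.
  - rewrite mulNmx -scalemxAl -[A^T *m C *m A^T *m A]mulmxA hA1 mul_mx_scalar scalerA.
    by rewrite /c mulVf // scale1r addNr.
  - rewrite /B mulmxN mulNmx opprK -scalemxAl -scalemxAr scalerA !mulmxA.
    rewrite -[A^T *m C *m A^T *m A]mulmxA hA1 mul_mx_scalar -!scalemxAl.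
    rewrite -[A^T *m C *m C^T]mulmxA hC2 mul_mx_scalar -!scalemxAl hA1 !scale_scalar_mx.
    rewrite sc_add addrC; congr (_ + _); congr (_%:M).
    by rewrite /c; field.
rewrite [(s1 + s2)%:M]scalar_mx_block; congr block_mx.
- rewrite /B mulmxN mulNmx opprK -scalemxAl -scalemxAr scalerA !mulmxA.
  rewrite -[A *m C^T *m A *m A^T]mulmxA hA2 mul_mx_scalar -!scalemxAl.
  rewrite -[A *m C^T *m C]mulmxA hC1 mul_mx_scalar -!scalemxAl hA2 !scale_scalar_mx.
  rewrite sc_add; congr (_ + _); congr (_%:M).
  by rewrite /c; field.
- rewrite /B mulNmx -scalemxAl -[A *m C^T *m A *m A^T]mulmxA hA2 mul_mx_scalar scalerA.
  by rewrite /c mulVf // scale1r addrN.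
- rewrite mulmxN -scalemxAr !mulmxA hA2 mul_scalar_mx -!scalemxAl scalerA.
  by rewrite /c mulVf // scale1r addrN.
- by rewrite hC2 hA2 sc_add addrC.
Qed.


End Bwd.

Section Bwd2.
Variable k : fieldType.

Lemma good_big I (r : seq I) (f : I -> k) :
  exists n, (0 < n)%N /\ Good n (\sum_(i <- r) f i ^+ 2).
Proof.
elim: r => [|y r [n [n0 hn]]].
  by exists 1%N; split => //; rewrite big_nil; exists 0; rewrite trmx0 mul0mx raddf0.
exists (n + n)%N; split; first by rewrite addn_gt0 n0.
by rewrite big_cons; apply: good_double => //; apply: good_sq.
Qed.

Lemma block_scalar_entry n (a b : k) (u v : 'I_(n + n)) :
  block_mx (a%:M : 'M_n) 0 0 (b%:M) u v = if u == v then (if (u < n)%N then a else b) else 0.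
Proof.
case: (split_ordP u) => u' ->; case: (split_ordP v) => v' ->.
- by rewrite block_mxEul mxE (inj_eq (@lshift_inj _ _)) /=; case: eqP.
- rewrite block_mxEur mxE; case: eqP => // /(congr1 val) /= e.
  by have := ltn_ord u'; rewrite e; lia.
- rewrite block_mxEdl mxE; case: eqP => // /(congr1 val) /= e.
  by have := ltn_ord v'; rewrite -e; lia.
- rewrite block_mxEdr mxE (inj_eq (@rshift_inj _ _)) /=.
  by case: eqP.
Qed.

Lemma unit_of_left n (X R : 'M[k]_n) : X *m R = 1%:M -> R \in unitmx.
Proof. by move/mulmx1_unit => []. Qed.

Hypothesis two_neq0 : (2%:R : k) != 0.

Lemma iso_R n (P : 'M[k]_n) alpha : alpha != 0 -> P^T *m P = alpha%:M ->
  exists R : 'M[k]_(n + n), R \in unitmx /\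
    R^T *m R = block_mx ((1 + 1)%:M) 0 0 ((alpha + alpha)%:M).
Proof.
move=> a0 hP; set R := block_mx 1%:M P 1%:M (- P).
have hRR : R^T *m R = block_mx ((1 + 1)%:M) 0 0 ((alpha + alpha)%:M).
  rewrite /R tr_block_mx trmx1 linearN /= mulmx_block !mul1mx !mulmx1 mulmxN mulNmx hP.
  by rewrite opprK subrr addrN !sc_add.
exists R; split => //.
have h2 : (1 + 1 : k) != 0 by rewrite -[1 + 1]/(2%:R).
have h2a : (alpha + alpha : k) != 0.
  by rewrite -mulr2n -mulr_natl mulf_neq0.
apply: (@unit_of_left _ (block_mx ((1 + 1)^-1%:M) 0 0 ((alpha + alpha)^-1%:M) *m R^T)).
rewrite -mulmxA hRR mulmx_block !mulmx0 !mul0mx !addr0 !add0r -!scalar_mxM.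
by rewrite !mulVf // -scalar_mx_block.
Qed.

End Bwd2.

Definition sigv n (j : nat) := if odd j then (n + j./2)%N else j./2.
Lemma sig_lt n (j : 'I_(n + n)) : (sigv n j < n + n)%N.
Proof.
have h : (j./2 < n)%N by rewrite ltn_half_double -addnn ltn_ord.
rewrite /sigv; case: ifP => _; lia.
Qed.
Definition sigo n (j : 'I_(n + n)) : 'I_(n + n) := Ordinal (sig_lt j).
Lemma sig_inj n : injective (@sigo n).
Proof.
move=> j1 j2 /(congr1 val) /=; rewrite /sigv => h; apply: val_inj => /=.
have e1 := odd_double_half j1; have e2 := odd_double_half j2.
have b1 : (j1./2 < n)%N by rewrite ltn_half_double -addnn ltn_ord.
have b2 : (j2./2 < n)%N by rewrite ltn_half_double -addnn ltn_ord.
rewrite -!muln2 in e1 e2.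
move: h e1 e2; case: (odd j1); case: (odd j2) => /= h e1 e2; lia.
Qed.

Section Fin.
Variable k : fieldType.

Lemma castmx_diag n m (e : n = m) (g : nat -> k) :
  castmx (e,e) (\matrix_(i, j) (if i == j then g i else 0) : 'M_n) =
  \matrix_(i, j) (if i == j then g i else 0).
Proof. by case: m / e; rewrite castmx_id. Qed.
Lemma castmx_scalar n m (e : n = m) (c : k) : castmx (e,e) (c%:M : 'M_n) = c%:M.
Proof. by case: m / e; rewrite castmx_id. Qed.
Lemma iso_cast n m (e : n = m) (X Y : 'M[k]_n) :
  isometric X Y -> isometric (castmx (e,e) X) (castmx (e,e) Y).
Proof. by case: m / e; rewrite !castmx_id. Qed.

Lemma gw_of_iso n m (e : n = m) (A : 'M[k]_n) (B : 'M[k]_m) :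
  isometric (castmx (e,e) A) B -> gw_eq A B.
Proof.
case: m / e B => B; rewrite castmx_id => -[P [Pu hP]].
exists 0%N, 1%:M; split; first by split; [rewrite trmx1 | apply: unitmx1].
exists erefl; rewrite castmx_id; exists (block_mx P 0 0 1%:M); split.
  by rewrite unitmxE det_ublock det1 mulr1 -unitmxE.
rewrite tr_block_mx !trmx0 trmx1 !mulmx_block.
by rewrite !mulmx0 !mul0mx !mulmx1 ?mul1mx !addr0 !add0r ?mul0mx hP.
Qed.

Hypothesis two_neq0 : (2%:R : k) != 0.

Theorem bwd (alpha : k) : alpha != 0 -> sosnz alpha ->
  (exists a b : nat, (0 < a)%N /\ (0 < b)%N /\
     gw_eq (dform (nseq a (1 : k)))
           (dform (flatten (nseq b [:: 2%:R; 2%:R * alpha])))).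
Proof.
move=> a0 [m [x [xnz ha]]].
have [n [n0 [P [hP _]]]] := good_big (index_enum 'I_m.+1) x.
rewrite -ha in hP.
have [R [Ru hR]] := iso_R two_neq0 a0 hP.
pose s : perm.perm_of 'I_(n + n) := perm.perm (@sig_inj n).
exists (n + n)%N, n; split; first by rewrite addn_gt0 n0.
split => //.
set L := flatten _.
have e : size (nseq (n + n) (1 : k)) = size L by rewrite size_nseq size_Lb addnn.
have e2 : (n + n)%N = size L by rewrite size_Lb addnn.
apply: (@gw_of_iso _ _ e); rewrite dform_nseq1 castmx_scalar.
set g := fun i : nat => if odd i then 2%:R * alpha else (2%:R : k).
have -> : dform L = castmx (e2,e2) (\matrix_(i, j) (if i == j then g i else 0)).
  rewrite castmx_diag; apply/matrixP => i j; rewrite !mxE /L nth_Lb //.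
  by rewrite -(size_Lb (2%:R : k) (2%:R * alpha) n).
rewrite -(castmx_scalar e2 1); apply: iso_cast.
exists (col_perm s R); split.
  by rewrite col_permE unitmx_mul Ru unitmx_perm.
apply/matrixP => i j; rewrite mulmx1.
transitivity ((R^T *m R) (s i) (s j)).
  by rewrite !mxE; apply: eq_bigr => l _; rewrite !mxE.
rewrite hR block_scalar_entry (inj_eq (@perm.perm_inj _ _)) !mxE.
case: eqP => // _; rewrite perm.permE /= /sigv /g.
have h : (i./2 < n)%N by rewrite ltn_half_double -addnn ltn_ord.
case ho: (odd i) => /=.
  have -> : (n + i./2 < n)%N = false by lia.
  by rewrite mulr_natl mulr2n.
by rewrite h.
Qed.

End Fin.

Lemma hasPos_cast (k : fieldType) pos n m (e : n = m) r (M : 'M[k]_n) (D : 'M[k]_r) p :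
  hasPos pos (block_mx M 0 0 D) p -> hasPos pos (block_mx (castmx (e,e) M) 0 0 D) p.
Proof. by case: m / e; rewrite castmx_id. Qed.

Theorem fwd (k : fieldType) (two_neq0 : (2%:R : k) != 0)
  (alpha : k) (alpha_neq0 : alpha != 0) :
  (exists a b : nat, (0 < a)%N /\ (0 < b)%N /\
     gw_eq (dform (nseq a (1 : k)))
           (dform (flatten (nseq b [:: 2%:R; 2%:R * alpha])))) ->
  sosnz alpha.
Proof.
move=> [a [b [_ [b0 [r [C [[Csym Cu] [e [P [Pu hP]]]]]]]]]].
case: (classic (sosnz alpha)) => // notS; exfalso.
set A := dform (nseq a (1 : k)) in e hP *.
set L := flatten _ in e hP *.
set B := dform L in hP *.
set pos := cone alpha.
have pos_add : forall x y, pos x -> pos y -> pos (x + y) := cone_add two_neq0 alpha_neq0 notS.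
have pos0 : ~ pos 0 := @cone0 _ alpha.
set K := invmx C.
set X1 := block_mx (castmx (e,e) (block_mx A 0 0 C)) 0 0 (-C).
set X2 := block_mx (block_mx B 0 0 C) 0 0 (-C).
have hQ : (block_mx P 0 0 1%:M)^T *m X1 *m block_mx P 0 0 1%:M = X2.
  rewrite tr_block_mx !trmx0 trmx1 /X1 /X2 !mulmx_block.
  by rewrite !mulmx0 !mul0mx !mulmx1 !mul1mx !addr0 !add0r mul0mx hP.
have hq2 : forall x2 : 'rV[k]_r, SOS (2%:R ^+ 2 * qf 1%:M x2).
  by move=> x2; apply: SOSM; [apply: SOSsq | rewrite qf1; apply: SOSbig].
have hq2nz : forall x2 : 'rV[k]_r, x2 != 0 -> 2%:R ^+ 2 * qf 1%:M x2 != 0.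
  move=> x2 hx; rewrite mulf_neq0 ?expf_neq0 // qf1.
  exact: (sumsq_nz two_neq0 alpha_neq0 notS).
have hP1 : hasPos pos X1 (size (nseq a (1 : k)) + r).
  apply: hasPos_cast.
  exists (col_mx (row_mx (row_mx 1%:M 0) 0) (row_mx (row_mx 0 (1%:M + K)) (1%:M - K))).
  move=> x; rewrite -[x]hsubmxK; set x1 := lsubmx x; set x2 := rsubmx x => hx.
  rewrite mul_row_col !mul_mx_row !mulmx0 !mulmx1 !add_row_mx !add0r !addr0.
  rewrite !qf_block qf_opp !mulmxDr mulmxN !mulmx1 /A dform_nseq1 -addrA (CmC _ Csym Cu).
  rewrite -[X in pos X]subr0 -[X in pos (_ - X)](mulr0 alpha).
  rewrite /pos; apply: (cone_of alpha_neq0 notS).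
  - by apply: SOSD => //; rewrite qf1; apply: SOSbig.
  - exact: SOS0.
  left; rewrite row_mx_eq0 negb_and in hx; case/orP: hx => h.
    apply: (lemB' two_neq0 alpha_neq0 notS) => //; first by rewrite qf1; apply: SOSbig.
    by rewrite qf1; apply: (sumsq_nz two_neq0 alpha_neq0 notS).
  rewrite addrC; apply: (lemB' two_neq0 alpha_neq0 notS) => //; last by apply: hq2nz.
  by rewrite qf1; apply: SOSbig.
have hN2 : hasNeg pos X2 (b + r).
  exists (col_mx (row_mx (row_mx (Vb 2%:R (2%:R * alpha) b) 0) 0) (row_mx (row_mx 0 (1%:M - K)) (1%:M + K))).
  move=> x; rewrite -[x]hsubmxK; set x1 := lsubmx x; set x2 := rsubmx x => hx.
  rewrite mul_row_col !mul_mx_row !mulmx0 !add_row_mx !add0r !addr0.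
  rewrite !qf_block qf_opp !mulmxDr mulmxN !mulmx1.
  have [S [hS [hSnz hB]]] := negB two_neq0 alpha_neq0 notS x1.
  rewrite /B /L hB.
  have hc := CmC x2 Csym Cu.
  have -> : - (alpha * S + qf C (x2 - x2 *m K) + - qf C (x2 + x2 *m K)) =
     2%:R ^+ 2 * qf 1%:M x2 - alpha * S by rewrite -hc /K; ring.
  rewrite /pos; apply: (cone_of alpha_neq0 notS) => //.
  rewrite row_mx_eq0 negb_and in hx; case/orP: hx => h.
    by right; apply: hSnz.
  by left; apply: hq2nz.
have hN1 := hasNeg_congr hQ hN2.
have := ineq pos_add pos0 hP1 hN1.
rewrite -e size_nseq; lia.
Qed.

Theorem lemma2p4 (k : fieldType) (two_neq0 : (2%:R : k) != 0)
  (alpha : k) (alpha_neq0 : alpha != 0) :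
  (exists a b : nat, (0 < a)%N /\ (0 < b)%N /\
     gw_eq (dform (nseq a (1 : k)))
           (dform (flatten (nseq b [:: 2%:R; 2%:R * alpha]))))
  <->
  (exists (m : nat) (x : 'I_m.+1 -> k),
     (forall i, x i != 0) /\ alpha = \sum_(i < m.+1) x i ^+ 2).
Proof.
split; first exact: fwd.
exact: (bwd two_neq0 alpha_neq0).
Qed.
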